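(* Let $R$ be a commutative ring and $(M_t,M_h;\mu_a,\mu_b)$ an object of $\mathrm{Rep}_R(\varkappa)$. Put $K=\ker(\mu_a)\cap\ker(\mu_b)$, $L_t=M_t/K$, $L_h=M_h$, $\lambda_a(m+K)=\mu_a(m)$, $\lambda_b(m+K)=\mu_b(m)$, $f_t(m)=m+K$ and $f_h=\mathrm{id}_{M_h}$. Then $(f_t,f_h)\colon(M_t,M_h;\mu_a,\mu_b)\to(L_t,L_h;\lambda_a,\lambda_b)$ is a $\mathrm{Rel}_R(\varkappa)$-envelope.
   Context: $\mathrm{Rep}_R(\varkappa)$: objects $(M_t,M_h;\mu_a,\mu_b)$ with $\mu_a,\mu_b\in\mathrm{Hom}_R(M_t,M_h)$, morphisms pairs $(f_t,f_h)$ of $R$-linear maps with $f_h\mu_c=\mu'_cf_t$ ($c=a,b$). $\mathrm{Rel}_R(\varkappa)$: full subcategory of objects with $\ker(\mu_a)\cap\ker(\mu_b)=0$. For a full subcategory $\mathcal{C}$, a $\mathcal{C}$-preenvelope of $M$ is a morphism $b\colon M\to N$ with $N\in\mathcal{C}$ such that every morphism $M\to C$ with $C\in\mathcal{C}$ factors as $ab$; a $\mathcal{C}$-envelope is a preenvelope $b$ such that every endomorphism $a$ of $N$ with $ab=b$ is an isomorphism. *)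

(* Defs.v *)
From HB Require Import structures.
From mathcomp Require Import all_boot all_algebra generic_quotient.
Set Implicit Arguments. Unset Strict Implicit. Unset Printing Implicit Defensive.
Import GRing.Theory.
Local Open Scope ring_scope.
Local Open Scope quotient_scope.

Record rep (R : comNzRingType) := Rep {
  Mt : lmodType R;
  Mh : lmodType R;
  mua : {linear Mt -> Mh};
  mub : {linear Mt -> Mh} }.
Arguments Rep {R}.

Definition is_rep_hom (R : comNzRingType) (M N : rep R)
  (ft : Mt M -> Mt N) (fh : Mh M -> Mh N) : Prop :=
  [/\ linear ft, linear fh,
      (forall m, fh (mua M m) = mua N (ft m)) &
      (forall m, fh (mub M m) = mub N (ft m))].

Definition in_Rel (R : comNzRingType) (M : rep R) : Prop :=
  forall m : Mt M, mua M m = 0 -> mub M m = 0 -> m = 0.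

Definition is_rep_iso (R : comNzRingType) (M N : rep R)
  (ft : Mt M -> Mt N) (fh : Mh M -> Mh N) : Prop :=
  is_rep_hom ft fh /\
  exists (gt : Mt N -> Mt M) (gh : Mh N -> Mh M),
    [/\ is_rep_hom gt gh, cancel ft gt, cancel gt ft, cancel fh gh & cancel gh fh].

Definition is_Rel_preenvelope (R : comNzRingType) (M N : rep R)
  (bt : Mt M -> Mt N) (bh : Mh M -> Mh N) : Prop :=
  [/\ is_rep_hom bt bh, in_Rel N &
      forall (C : rep R) (gt : Mt M -> Mt C) (gh : Mh M -> Mh C),
        in_Rel C -> is_rep_hom gt gh ->
        exists (at_ : Mt N -> Mt C) (ah : Mh N -> Mh C),
          [/\ is_rep_hom at_ ah, at_ \o bt =1 gt & ah \o bh =1 gh]].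

Definition is_Rel_envelope (R : comNzRingType) (M N : rep R)
  (bt : Mt M -> Mt N) (bh : Mh M -> Mh N) : Prop :=
  is_Rel_preenvelope bt bh /\
  forall (at_ : Mt N -> Mt N) (ah : Mh N -> Mh N),
    is_rep_hom at_ ah -> at_ \o bt =1 bt -> ah \o bh =1 bh -> is_rep_iso at_ ah.

Section KerQuot.
Variables (R : comNzRingType) (M : rep R).

Definition kerK : {pred Mt M} := fun m => (mua M m == 0) && (mub M m == 0).

Definition kerK_rel : rel (Mt M) := fun x y => (x - y) \in kerK.

Lemma kerK_relE x y : kerK_rel x y = (mua M x == mua M y) && (mub M x == mub M y).
Proof. by rewrite /kerK_rel unfold_in /kerK !raddfB /= !subr_eq0. Qed.

Lemma kerK_refl : reflexive kerK_rel.
Proof. by move=> x; rewrite kerK_relE !eqxx. Qed.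
Lemma kerK_sym : symmetric kerK_rel.
Proof. by move=> x y; rewrite !kerK_relE [mua M x == _]eq_sym [mub M x == _]eq_sym. Qed.
Lemma kerK_trans : transitive kerK_rel.
Proof.
move=> y x z; rewrite !kerK_relE => /andP[/eqP -> /eqP ->] /andP[/eqP -> /eqP ->].
by rewrite !eqxx.
Qed.

Canonical kerK_equiv := EquivRel kerK_rel kerK_refl kerK_sym kerK_trans.

Definition quotK := {eq_quot kerK_equiv}.
HB.instance Definition _ := Choice.on quotK.

Definition qpi (m : Mt M) : quotK := \pi_quotK m.

Lemma qpi_eq x y : (qpi x = qpi y) <-> (mua M x = mua M y /\ mub M x = mub M y).
Proof.
split=> [/eqmodP | [ea eb]].
  by rewrite /= kerK_relE => /andP[/eqP -> /eqP ->].
by apply/eqmodP; rewrite /= kerK_relE ea eb !eqxx.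
Qed.

Lemma qpiK (q : quotK) : qpi (repr q) = q.
Proof. exact: reprK. Qed.

Lemma repr_qpi x : mua M (repr (qpi x)) = mua M x /\ mub M (repr (qpi x)) = mub M x.
Proof. by apply/qpi_eq; rewrite qpiK. Qed.

Definition qzero : quotK := qpi 0.
Definition qadd (p q : quotK) : quotK := qpi (repr p + repr q).
Definition qopp (q : quotK) : quotK := qpi (- repr q).
Definition qscale (a : R) (q : quotK) : quotK := qpi (a *: repr q).

Lemma qaddE x y : qadd (qpi x) (qpi y) = qpi (x + y).
Proof.
apply/qpi_eq; have [a1 b1] := repr_qpi x; have [a2 b2] := repr_qpi y.
by rewrite !raddfD /= a1 a2 b1 b2.
Qed.
Lemma qoppE x : qopp (qpi x) = qpi (- x).
Proof. by apply/qpi_eq; have [a1 b1] := repr_qpi x; rewrite !raddfN /= a1 b1. Qed.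
Lemma qscaleE a x : qscale a (qpi x) = qpi (a *: x).
Proof. by apply/qpi_eq; have [a1 b1] := repr_qpi x; rewrite !linearZ /= a1 b1. Qed.

Lemma qind (P : quotK -> Prop) : (forall x, P (qpi x)) -> forall q, P q.
Proof. by move=> H q; rewrite -(qpiK q). Qed.

Lemma qaddA : associative qadd.
Proof. by elim/qind=> x; elim/qind=> y; elim/qind=> z; rewrite !qaddE addrA. Qed.
Lemma qaddC : commutative qadd.
Proof. by elim/qind=> x; elim/qind=> y; rewrite !qaddE addrC. Qed.
Lemma qadd0 : left_id qzero qadd.
Proof. by elim/qind=> x; rewrite /qzero qaddE add0r. Qed.
Lemma qaddN : left_inverse qzero qopp qadd.
Proof. by elim/qind=> x; rewrite qoppE qaddE addNr. Qed.

HB.instance Definition _ := GRing.isZmodule.Build quotK qaddA qaddC qadd0 qaddN.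

Lemma qaddE' x y : qpi x + qpi y = qpi (x + y). Proof. exact: qaddE. Qed.

Lemma qscaleA a b v : qscale a (qscale b v) = qscale (a * b) v.
Proof. by elim/qind: v => x; rewrite !qscaleE scalerA. Qed.
Lemma qscale1 : left_id 1 qscale.
Proof. by elim/qind=> x; rewrite qscaleE scale1r. Qed.
Lemma qscaleDr : right_distributive qscale +%R.
Proof. by move=> a; elim/qind=> x; elim/qind=> y; rewrite qaddE' !qscaleE scalerDr qaddE'. Qed.
Lemma qscaleDl v : {morph qscale^~ v : a b / a + b}.
Proof. by elim/qind: v => x a b; rewrite !qscaleE scalerDl qaddE'. Qed.

HB.instance Definition _ :=
  GRing.Zmodule_isLmodule.Build R quotK qscaleA qscale1 qscaleDr qscaleDl.

Lemma qscaleE' a x : a *: qpi x = qpi (a *: x). Proof. exact: qscaleE. Qed.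

Definition lama (q : quotK) : Mh M := mua M (repr q).
Definition lamb (q : quotK) : Mh M := mub M (repr q).

Lemma lama_qpi x : lama (qpi x) = mua M x. Proof. by case: (repr_qpi x). Qed.
Lemma lamb_qpi x : lamb (qpi x) = mub M x. Proof. by case: (repr_qpi x). Qed.

Lemma lama_linear : linear lama.
Proof.
move=> a; elim/qind=> x; elim/qind=> y.
by rewrite qscaleE' qaddE' !lama_qpi linearP.
Qed.
Lemma lamb_linear : linear lamb.
Proof.
move=> a; elim/qind=> x; elim/qind=> y.
by rewrite qscaleE' qaddE' !lamb_qpi linearP.
Qed.

HB.instance Definition _ := GRing.isLinear.Build R quotK (Mh M) _ lama lama_linear.
HB.instance Definition _ := GRing.isLinear.Build R quotK (Mh M) _ lamb lamb_linear.

Definition relQuot : rep R := Rep quotK (Mh M) lama lamb.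

End KerQuot.

(* Main.v *)
Require Import Defs.
From mathcomp Require Import all_boot all_algebra.
Import GRing.Theory.
Local Open Scope ring_scope.

Section Aux.
Variables (R : comNzRingType) (M : rep R).

Lemma qpi_linear : linear (@qpi R M).
Proof. by move=> a x y; rewrite /= qscaleE' qaddE'. Qed.

Lemma id_linear (V : lmodType R) : linear (fun m : V => m).
Proof. by []. Qed.

Lemma qzeroE : (0 : quotK M) = @qpi R M 0.
Proof. by []. Qed.

Lemma factor_eq (C : rep R) gt gh : in_Rel C -> is_rep_hom (N:=C) gt gh ->
  forall x y : Mt M, @qpi R M x = @qpi R M y -> gt x = gt y.
Proof.
move=> HC [lt lh ha hb] x y /qpi_eq [ea eb].
have gtB : gt (x - y) = gt x - gt y.
  by have := lt (-1) y x; rewrite !scaleN1r => E; rewrite [x - y]addrC E [RHS]addrC.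
have ghB : forall u v, gh (u - v) = gh u - gh v.
  by move=> u v; have := lh (-1) v u; rewrite !scaleN1r => E; rewrite [u - v]addrC E [RHS]addrC.
apply/eqP; rewrite -subr_eq0 -gtB; apply/eqP/HC.
  by rewrite -ha raddfB /= ea subrr -(subrr 0) ghB subrr.
by rewrite -hb raddfB /= eb subrr -(subrr 0) ghB subrr.
Qed.

End Aux.

Theorem lemma3p7 (R : comNzRingType) (M : rep R) :
  @is_Rel_envelope R M (relQuot M) (@qpi R M) (fun m : Mh M => m).
Proof.
have homq : is_rep_hom (M:=M) (N:=relQuot M) (@qpi R M) (fun m : Mh M => m).
  split; [exact: qpi_linear| exact: id_linear| |] => m /=.
    by rewrite lama_qpi.
  by rewrite lamb_qpi.
split; [split|].
- exact: homq.
- elim/qind=> x /=; rewrite lama_qpi lamb_qpi => ea eb.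
  by rewrite qzeroE; apply/qpi_eq; rewrite ea eb !raddf0.
- move=> C gt gh HC Hg.
  have key := @factor_eq R M C gt gh HC Hg.
  have [lt lh ha hb] := Hg.
  have reprE : forall x, gt (repr (@qpi R M x)) = gt x.
    by move=> x; apply: key; rewrite qpiK.
  exists (fun q : quotK M => gt (repr q)), gh; split => //.
  + split => //.
    * move=> a; elim/qind=> x; elim/qind=> y.
      by rewrite qscaleE' qaddE' !reprE lt.
    * by elim/qind=> x /=; rewrite lama_qpi reprE ha.
    * by elim/qind=> x /=; rewrite lamb_qpi reprE hb.
- move=> at_ ah Ha Hat Hah.
  have at_id : forall q, at_ q = q by elim/qind=> x; exact: Hat.
  have ah_id : forall m, ah m = m by move=> m; exact: Hah.
  split => //.
  exists (fun q => q), (fun m => m); split; try split; try exact: id_linear;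
    move=> *; by rewrite /= ?ah_id ?at_id.
Qed.
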